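(* Let $\beta>0$, let $\mathbf{s}=(\mathbf{s}_{\mathrm{sys}},\mathbf{s}_{\mathrm{env}})$ with $\mathbf{s}_{\mathrm{sys}}=(\mathbf{s}_1,\dots,\mathbf{s}_K)$, and let $\mathbf{x}=(\mathbf{x}_1,\dots,\mathbf{x}_K)$ where $\mathbf{x}_i$ and $\mathbf{s}_i$ live in the same Euclidean space. Let $p_1,\dots,p_K$ be prior densities and $U_{\mathrm{env}}$ an environment energy. Suppose the interaction energy is quadratic in $\mathbf{s}_{\mathrm{sys}}$ given $\mathbf{s}_{\mathrm{env}}$: $$\exp(-\beta U_{\mathrm{int}}(\mathbf{s}_{\mathrm{sys}},\mathbf{s}_{\mathrm{env}}))\propto\mathcal{N}(\mathbf{s}_{\mathrm{sys}}\mid\boldsymbol{\mu}_c(\mathbf{s}_{\mathrm{env}}),\boldsymbol{\Sigma}_c(\mathbf{s}_{\mathrm{env}})).$$ Assume the forward kernels at diffusion time $t>0$ satisfy $$\prod_{i=1}^K q_t^{(i)}(\mathbf{s}_i\mid\mathbf{x}_i)=\mathcal{N}(\mathbf{s}_{\mathrm{sys}}\mid\mathbf{A}_t\mathbf{x},\boldsymbol{\Sigma}_t)$$ with $\mathbf{A}_t$ square and invertible, and let the finite-$t$ context schedule be $$q_{\mathrm{ctx}}(\mathbf{s},t)\propto\exp(-\beta U_{\mathrm{env}}(\mathbf{s}_{\mathrm{env}}))\,q_{\mathrm{int}}(\mathbf{s}_{\mathrm{sys}}\mid\mathbf{s}_{\mathrm{env}},t),\qquad q_{\mathrm{int}}(\mathbf{s}_{\mathrm{sys}}\mid\mathbf{s}_{\mathrm{env}},t)=\mathcal{N}(\mathbf{s}_{\mathrm{sys}}\mid\boldsymbol{\mu}_q(\mathbf{s}_{\mathrm{env}},t),\boldsymbol{\Sigma}_q(\mathbf{s}_{\mathrm{env}},t)).$$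 Define $$\pi_t(\mathbf{x},\mathbf{s}_{\mathrm{env}})\propto\int q_{\mathrm{ctx}}(\mathbf{s},t)\prod_{i=1}^K p_i(\mathbf{x}_i)\,q_t^{(i)}(\mathbf{s}_i\mid\mathbf{x}_i)\,d\mathbf{s}_{\mathrm{sys}},\qquad \pi_0(\mathbf{x},\mathbf{s}_{\mathrm{env}})\propto\exp(-\beta U_{\mathrm{env}}(\mathbf{s}_{\mathrm{env}}))\Big(\prod_{i=1}^K p_i(\mathbf{x}_i)\Big)\exp(-\beta U_{\mathrm{int}}(\mathbf{x},\mathbf{s}_{\mathrm{env}})).$$ Then $\pi_t(\mathbf{x},\mathbf{s}_{\mathrm{env}})\propto\pi_0(\mathbf{x},\mathbf{s}_{\mathrm{env}})$ if and only if $$\boldsymbol{\mu}_q(\mathbf{s}_{\mathrm{env}},t)=\mathbf{A}_t\boldsymbol{\mu}_c(\mathbf{s}_{\mathrm{env}}),\qquad \boldsymbol{\Sigma}_q(\mathbf{s}_{\mathrm{env}},t)=\mathbf{A}_t\boldsymbol{\Sigma}_c(\mathbf{s}_{\mathrm{env}})\mathbf{A}_t^\top-\boldsymbol{\Sigma}_t.$$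
   Context: $\mathcal{N}(\mathbf{z}\mid\boldsymbol{\mu},\boldsymbol{\Sigma})$ denotes the multivariate Gaussian density in $\mathbf{z}$ with mean $\boldsymbol{\mu}$ and (symmetric positive-definite) covariance $\boldsymbol{\Sigma}$. Here $\mathbf{s}_{\mathrm{sys}}$ collects the system coordinates coupled to the priors through the projections $\Phi_i(\mathbf{s})=\mathbf{s}_i$, and $q_t^{(i)}$ is the forward diffusion kernel of prior $i$. The proportionality $\pi_t(\mathbf{x},\mathbf{s}_{\mathrm{env}})\propto\pi_0(\mathbf{x},\mathbf{s}_{\mathrm{env}})$ is understood as proportionality in $\mathbf{x}$ with a constant that may depend on $\mathbf{s}_{\mathrm{env}}$ and $t$ but not on $\mathbf{x}$. *)

(* Defs.v *)
From HB Require Import structures.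
From mathcomp Require Import all_boot all_order all_algebra.
From mathcomp Require Import all_classical all_reals all_analysis.
Set Implicit Arguments. Unset Strict Implicit. Unset Printing Implicit Defensive.
Import Order.TTheory GRing.Theory Num.Theory.
Local Open Scope ring_scope.

Definition spd (R : realType) (n : nat) (S : 'M[R]_n) : Prop :=
  S^T = S /\ forall v : 'cV[R]_n, v != 0 -> 0 < (v^T *m S *m v) 0 0.

Definition mvn_pdf (R : realType) (n : nat) (z mu : 'cV[R]_n) (S : 'M[R]_n) : R :=
  (Num.sqrt (((pi : R) *+ 2) ^+ n * \det S))^-1 *
  expR (- (((z - mu)^T *m invmx S *m (z - mu)) 0 0) / 2).

(* Lebesgue integral over R^n, written as the iterated one-dimensional
   Lebesgue integral over the coordinates (Tonelli: equals the integral
   against n-dimensional Lebesgue measure for nonnegative measurable f). *)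
Fixpoint leb_int (R : realType) (n : nat) : ('cV[R]_n -> \bar R) -> \bar R :=
  match n return ('cV[R]_n -> \bar R) -> \bar R with
  | 0 => fun f => f 0
  | n'.+1 => fun f =>
      (\int[@lebesgue_measure R]_(r in setT)
         leb_int (fun z : 'cV[R]_n' => f (col_mx (r%:M : 'cV[R]_1) z)))%E
  end.

(* Main.v *)
Require Import Defs.
From HB Require Import structures.
From mathcomp Require Import all_boot all_order all_algebra.
From mathcomp Require Import all_classical all_reals all_analysis.
From mathcomp Require Import measurable_realfun.
From mathcomp Require Import ring lra.
Set Implicit Arguments. Unset Strict Implicit. Unset Printing Implicit Defensive.
Import Order.TTheory GRing.Theory Num.Theory.
Local Open Scope ring_scope.

Section G1.
Variable R : realType.

Lemma int_normal_fun (m s : R) : s != 0 ->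
  (\int[@lebesgue_measure R]_(x in setT) (normal_fun m s x)%:E = (normal_peak s)^-1%:E)%E.
Proof.
move=> s0.
have := integral_normal_pdf m s; rewrite normal_pdfE //=.
under eq_integral do rewrite EFinM.
rewrite ge0_integralZl //=; last 3 first.
- by apply/measurable_EFinP; exact: measurable_normal_fun.
- by move=> x _; rewrite lee_fin normal_fun_ge0.
- by rewrite lee_fin normal_peak_ge0.
have pk := normal_peak_gt0 s0.
set X := (\int[_]_(_ in _) _)%E.
case: X => [r| |] //=.
- move=> [] h; congr EFin; apply: (@mulfI _ (normal_peak s)); first by rewrite gt_eqF.
  by rewrite h divff // gt_eqF.
- by rewrite mulry gtr0_sg // mul1e.
- by rewrite mulrNy gtr0_sg // mul1e.
Qed.

Lemma gauss1 (K c a r0 : R) : 0 < a -> 0 <= K ->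
  (\int[@lebesgue_measure R]_(r in setT) (K * expR (c - a * (r - r0) ^+ 2 / 2))%:E
   = (K * expR c * Num.sqrt (pi *+ 2 / a))%:E)%E.
Proof.
move=> a0 K0.
set s := Num.sqrt a^-1.
have s2 : s ^+ 2 = a^-1 by rewrite sqr_sqrtr // invr_ge0 ltW.
have s0 : s != 0 by rewrite gt_eqF // sqrtr_gt0 invr_gt0.
have -> : (fun r => (K * expR (c - a * (r - r0) ^+ 2 / 2))%:E) =
          (fun r => (K * expR c)%:E * (normal_fun r0 s r)%:E)%E.
  apply/funext => r; rewrite -EFinM /normal_fun s2 -(mulrA K) -expRD.
  congr (K * expR _)%:E; rewrite -mulr_natr; field; exact: lt0r_neq0.
rewrite (@ge0_integralZl _ _ _ lebesgue_measure setT measurableT (fun r => (normal_fun r0 s r)%:E)) //=; last 3 first.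
- by apply/measurable_EFinP; exact: measurable_normal_fun.
- by move=> x _; rewrite lee_fin normal_fun_ge0.
- by rewrite lee_fin mulr_ge0 // expR_ge0.
have E : forall p : R, a^-1 * p *+ 2 = p *+ 2 / a.
  by move=> p; rewrite mulrC mulrnAl.
by rewrite int_normal_fun // /normal_peak invrK -EFinM s2 E.
Qed.


Definition qf n (M : 'M[R]_n) (v : 'cV[R]_n) : R := (v^T *m M *m v) 0 0.

Lemma spd_unit n (S : 'M[R]_n) : spd S -> S \in unitmx.
Proof.
move=> [_ hS]; rewrite unitmxE unitfE; apply/negP => /det0P [v v0 vS].
have := hS v^T; rewrite trmx_eq0 v0 trmxK vS mul0mx mxE ltxx.
by move=> /(_ isT).
Qed.

Lemma spd_inv n (S : 'M[R]_n) : spd S -> spd (invmx S).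
Proof.
move=> hS; have uS := spd_unit hS; case: hS => St hS.
split; first by rewrite trmx_inv St.
move=> v v0; set w := invmx S *m v.
have Sw : S *m w = v by rewrite /w mulKVmx.
have w0 : w != 0 by apply: contraNneq v0 => w0; rewrite -Sw w0 mulmx0.
have := hS w w0.
by rewrite /w trmx_mul trmx_inv St -!mulmxA mulKVmx.
Qed.

Lemma spd_add n (S1 S2 : 'M[R]_n) : spd S1 -> spd S2 -> spd (S1 + S2).
Proof.
move=> [t1 h1] [t2 h2]; split; first by rewrite linearD /= t1 t2.
move=> v v0; rewrite mulmxDr mulmxDl mxE.
exact: addr_gt0 (h1 v v0) (h2 v v0).
Qed.

Lemma qf_scalar (x : R) (M : 'M[R]_1) :
  (((x%:M : 'cV[R]_1)^T *m M *m x%:M) 0 0) = x ^+ 2 * M 0 0.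
Proof.
rewrite tr_scalar_mx mul_scalar_mx mul_mx_scalar !mxE; ring.
Qed.

Section Block.
Variable n : nat.
Variable P : 'M[R]_(1 + n).
Hypothesis PT : P^T = P.
Let a := ulsubmx P.
Let wT := ursubmx P.
Let w := dlsubmx P.
Let P' := drsubmx P.

Lemma blk_sym : w^T = wT /\ P'^T = P'.
Proof.
have H : (block_mx a wT w P')^T = block_mx a wT w P' by rewrite /a /wT /w /P' submxK.
rewrite tr_block_mx in H; case/eq_block_mx: H => _ _ h2 h3.
by rewrite -h2 trmxK.
Qed.

Lemma blk_expand (u : 'cV[R]_1) (y : 'cV[R]_n) :
  (col_mx u y)^T *m P *m col_mx u y =
  u^T *m a *m u + y^T *m w *m u + (u^T *m wT *m y + y^T *m P' *m y).
Proof.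
rewrite -{1}(submxK P) tr_col_mx mul_row_block mul_row_col !mulmxDl.
by rewrite -/a -/wT -/w -/P'.
Qed.

Hypothesis hP : spd P.

Lemma mxE00D p q (A B : 'M[R]_(p.+1, q.+1)) : (A + B) 0 0 = A 0 0 + B 0 0.
Proof. by rewrite mxE. Qed.
Lemma mxE00B p q (A B : 'M[R]_(p.+1, q.+1)) : (A - B) 0 0 = A 0 0 - B 0 0.
Proof. by rewrite !mxE. Qed.

Lemma mxE00N p q (A : 'M[R]_(p.+1, q.+1)) : (- A) 0 0 = - A 0 0.
Proof. by rewrite !mxE. Qed.

Lemma blk_spd : spd P'.
Proof.
have [_ sP'] := blk_sym.
split=> // y y0.
have := hP.2 (col_mx 0 y); rewrite col_mx_eq0 eqxx y0 /= => /(_ isT).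
by rewrite blk_expand trmx0 !(mul0mx, mulmx0, add0r).
Qed.

Let uP' := spd_unit blk_spd.
Definition blk_m := invmx P' *m w.
Definition blk_al := a - wT *m blk_m.

Lemma blk_square (u : 'cV[R]_1) (y : 'cV[R]_n) :
  ((col_mx u y)^T *m P *m col_mx u y) 0 0 =
  ((y + blk_m *m u)^T *m P' *m (y + blk_m *m u)) 0 0 + (u^T *m blk_al *m u) 0 0.
Proof.
have [ws sP'] := blk_sym.
have h1 : P' *m blk_m = w by rewrite /blk_m mulKVmx.
have h2 : blk_m^T *m P' = wT by rewrite -sP' -trmx_mul h1 ws.
rewrite /blk_al; move: (blk_m) h1 h2 => m h1 h2.
rewrite blk_expand (linearD (@trmx R _ _)) /= trmx_mul.
rewrite !mulmxDl !mulmxDr ?mulmxN ?mulNmx ?mulmxBl -!mulmxA !(mulmxA m^T P') h2.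
rewrite !(mulmxA P' m) h1 !mulmxA.
rewrite !mxE00D ?mxE00B ?mxE00N.
lra.
Qed.

Lemma one_cV1_neq0 : (1%:M : 'cV[R]_1) != 0.
Proof.
apply/negP => /eqP /matrixP /(_ 0 0); rewrite !mxE /= => /eqP.
by rewrite oner_eq0.
Qed.

Lemma blk_al_gt0 : 0 < blk_al 0 0.
Proof.
have := hP.2 (col_mx 1%:M (- blk_m)).
rewrite col_mx_eq0 negb_and one_cV1_neq0 /= => /(_ isT).
rewrite blk_square mulmx1 addNr trmx0 !mul0mx mxE add0r.
by rewrite tr_scalar_mx mul1mx mulmx1.
Qed.

Lemma blk_det : \det P = blk_al 0 0 * \det P'.
Proof.
have h1 : P' *m blk_m = w by rewrite /blk_m mulKVmx.
pose L : 'M[R]_(1 + n) := block_mx 1%:M 0 (- blk_m) 1%:M.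
have E : P *m L = block_mx blk_al wT 0 P'.
  rewrite /L -{1}(submxK P) mulmx_block -/a -/wT -/w -/P'.
  by rewrite !mulmx1 !mulmx0 !mulmxN h1 subrr !add0r.
have := congr1 determinant E.
by rewrite det_mulmx det_lblock !det1 !mulr1 det_ublock det_mx11.
Qed.
End Block.


Lemma spd_det n (S : 'M[R]_n) : spd S -> 0 < \det S.
Proof.
elim: n S => [|n IH] S hS; first by rewrite det_mx00.
have hS' : spd (S : 'M[R]_(1 + n)) by [].
rewrite (blk_det hS'.1 hS').
exact: mulr_gt0 (blk_al_gt0 hS'.1 hS') (IH _ (blk_spd hS'.1 hS')).
Qed.

Lemma sc_sub (r u : R) : (r%:M : 'cV[R]_1) - u%:M = (r - u)%:M.
Proof. by apply/matrixP => i j; rewrite !mxE; case: (i == j); rewrite ?mulr1n ?mulr0n ?subr0. Qed.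

Lemma step_eq n (P : 'M[R]_(1 + n)) (hP : spd P) (r u0 c : R) (z zd : 'cV[R]_n) :
  c - qf P (col_mx r%:M z - col_mx u0%:M zd) / 2 =
  c - blk_al P 0 0 * (r - u0) ^+ 2 / 2 -
  qf (drsubmx P) (z - (zd - blk_m P *m (r - u0)%:M)) / 2.
Proof.
rewrite opp_col_mx add_col_mx sc_sub.
rewrite /qf (blk_square hP.1 hP) qf_scalar.
have -> : z - zd + blk_m P *m (r - u0)%:M = z - (zd - blk_m P *m (r - u0)%:M).
  by rewrite opprB addrA addrAC.
lra.
Qed.

Lemma gauss_int n (P : 'M[R]_n) : spd P -> exists K, 0 < K /\
  forall (z0 : 'cV[R]_n) (c : R),
    leb_int (fun z => (expR (c - qf P (z - z0) / 2))%:E) = (K * expR c)%:E.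
Proof.
elim: n P => [|n IH] P hP.
  exists 1; split => // z0 c /=.
  by rewrite /qf mxE big_ord0 mul0r subr0 mul1r.
have hP' : spd (P : 'M[R]_(1 + n)) by [].
have [K' [K'0 HK']] := IH _ (blk_spd hP'.1 hP').
set al := blk_al P 0 0.
have al0 : 0 < al := blk_al_gt0 hP'.1 hP'.
exists (K' * Num.sqrt (pi *+ 2 / al)); split.
  by rewrite mulr_gt0 // sqrtr_gt0 divr_gt0 // mulrn_wgt0 // pi_gt0.
move=> z0 c /=.
set u0 := usubmx (z0 : 'cV[R]_(1 + n)) 0 0.
have inner : forall r : R, leb_int (fun z : 'cV_n =>
   (expR (c - qf P (col_mx r%:M z - z0) / 2))%:E) =
   (K' * expR (c - al * (r - u0) ^+ 2 / 2))%:E.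
  move=> r.
  pose zd := dsubmx (z0 : 'cV[R]_(1 + n)).
  rewrite -(HK' (zd - blk_m P *m (r - u0)%:M) (c - al * (r - u0) ^+ 2 / 2)).
  congr leb_int; apply/funext => z; congr (expR _)%:E.
  have ez : (z0 : 'cV[R]_(1 + n)) = col_mx (u0%:M) zd.
    by rewrite /u0 /zd -mx11_scalar vsubmxK.
  rewrite ez; exact: (step_eq hP').
under eq_integral => r _ do rewrite inner.
rewrite gauss1 //; last exact: ltW.
by rewrite mulrAC.
Qed.

End G1.

Set Implicit Arguments. Unset Strict Implicit.

Section L.
Variable R : realType.
Variable N : nat.
Implicit Types (S Q B : 'M[R]_N) (x y v : 'cV[R]_N).

Definition dot (u x : 'cV[R]_N) : R := (u^T *m x) 0 0.

Lemma m11T (M : 'M[R]_1) : M^T 0 0 = M 0 0.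
Proof. by rewrite mxE. Qed.

Lemma e00D (A B : 'M[R]_1) : (A + B) 0 0 = A 0 0 + B 0 0.
Proof. by rewrite mxE. Qed.
Lemma e00B (A B : 'M[R]_1) : (A - B) 0 0 = A 0 0 - B 0 0.
Proof. by rewrite !mxE. Qed.
Lemma e00N (A : 'M[R]_1) : (- A) 0 0 = - A 0 0.
Proof. by rewrite !mxE. Qed.

Lemma qfN S x : qf S (- x) = qf S x.
Proof. by rewrite /qf (linearN (@trmx R _ _)) /= mulNmx mulmxN mulNmx opprK. Qed.

Lemma qfB S x y : S^T = S ->
  qf S (x - y) = qf S x - 2 * dot (S *m y) x + qf S y.
Proof.
move=> St.
have h1 : (x^T *m S *m y) 0 0 = dot (S *m y) x.
  by rewrite /dot -m11T !trmx_mul ?trmxK St ?mulmxA.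
have h2 : (y^T *m S *m x) 0 0 = dot (S *m y) x.
  by rewrite /dot trmx_mul St ?mulmxA.
rewrite /qf (linearB (@trmx R _ _)) /= !mulmxBl !mulmxBr !e00B h1 h2; lra.
Qed.

Lemma qfM S B x : qf S (B *m x) = qf (B^T *m S *m B) x.
Proof. by rewrite /qf trmx_mul !mulmxA. Qed.

Lemma qfSB Q1 Q2 x : qf (Q1 - Q2) x = qf Q1 x - qf Q2 x.
Proof. by rewrite /qf mulmxBr mulmxBl e00B. Qed.

Lemma dotB (u1 u2 x : 'cV[R]_N) : dot (u1 - u2) x = dot u1 x - dot u2 x.
Proof. by rewrite /dot (linearB (@trmx R _ _)) /= mulmxBl e00B. Qed.

Lemma qf_delta (S : 'M[R]_N) (i j : 'I_N) :
  ((delta_mx i 0 : 'cV[R]_N)^T *m S *m (delta_mx j 0 : 'cV[R]_N)) 0 0 = S i j.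
Proof. by rewrite trmx_delta -rowE -colE !mxE. Qed.

Lemma dot_delta (u : 'cV[R]_N) (i : 'I_N) : dot u (delta_mx i 0) = u i 0.
Proof. by rewrite /dot -colE !mxE. Qed.

Lemma qf0_sym S : S^T = S -> (forall x, qf S x = 0) -> S = 0.
Proof.
move=> St h; apply/matrixP => i j; rewrite mxE.
have hii : forall k, S k k = 0 by move=> k; rewrite -qf_delta; exact: h.
have := h (delta_mx i 0 + delta_mx j 0).
rewrite /qf (linearD (@trmx R _ _)) /= !mulmxDl !mulmxDr !e00D !qf_delta !hii.
have -> : S j i = S i j by rewrite -{1}St mxE.
lra.
Qed.

Lemma dot0 (u : 'cV[R]_N) : (forall x, dot u x = 0) -> u = 0.
Proof.
move=> h; apply/matrixP => i j; rewrite (ord1 j) mxE -dot_delta; exact: h.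
Qed.

Lemma qf0 S : qf S 0 = 0.
Proof. by rewrite /qf mulmx0 mxE. Qed.
Lemma dotx0 u : dot u 0 = 0.
Proof. by rewrite /dot mulmx0 mxE. Qed.

Lemma dotN u x : dot u (- x) = - dot u x.
Proof. by rewrite /dot mulmxN e00N. Qed.

Lemma quad_ident Q1 Q2 B v1 v2 (k : R) : Q1^T = Q1 -> Q2^T = Q2 ->
  (forall x, qf Q1 (v1 - B *m x) = qf Q2 (x - v2) + k) ->
  B^T *m Q1 *m B = Q2 /\ B^T *m Q1 *m v1 = Q2 *m v2.
Proof.
move=> s1 s2 h.
pose D := B^T *m Q1 *m B - Q2.
pose l := B^T *m Q1 *m v1 - Q2 *m v2.
have hT : forall x, qf Q1 (v1 - B *m x) - qf Q2 (x - v2)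
    = qf D x - 2 * dot l x + (qf Q1 v1 - qf Q2 v2).
  move=> x.
  rewrite -qfN opprB (qfB _ _ s1) (qfB _ _ s2) qfM qfSB dotB.
  have -> : dot (Q1 *m v1) (B *m x) = dot (B^T *m Q1 *m v1) x.
    by rewrite /dot !trmx_mul trmxK !mulmxA.
  lra.
have hk : forall x, qf D x - 2 * dot l x = 0.
  move=> x; have := hT x; have := hT 0; rewrite !h.
  rewrite sub0r qfN qf0 dotx0 => H0 Hx; lra.
have hD : forall x, qf D x = 0.
  move=> x; have := hk x; have := hk (- x); rewrite qfN dotN; lra.
have D0 : D = 0.
  apply: qf0_sym => //; rewrite /D (linearB (@trmx R _ _)) /= s2 !trmx_mul trmxK s1.
  by rewrite mulmxA.
have l0 : l = 0.
  apply: dot0 => x; have := hk x; rewrite hD; lra.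
by split; apply/eqP; rewrite -subr_eq0 ?(D0, l0) //; [rewrite -/D D0 | rewrite -/l l0].
Qed.

Lemma qfSD Q1 Q2 x : qf (Q1 + Q2) x = qf Q1 x + qf Q2 x.
Proof. by rewrite /qf mulmxDr mulmxDl e00D. Qed.

Lemma spd_sym S : spd S -> S^T = S.
Proof. by case. Qed.

Lemma inv_sym S : spd S -> (invmx S)^T = invmx S.
Proof. by move=> h; rewrite trmx_inv (spd_sym h). Qed.

Lemma qf_sum (Sq St : 'M[R]_N) (a1 a2 s : 'cV[R]_N) : spd Sq -> spd St ->
  qf (invmx Sq) (s - a1) + qf (invmx St) (s - a2) =
  qf (invmx Sq + invmx St) (s - (a1 - Sq *m (invmx (Sq + St) *m (a1 - a2))))
  + qf (invmx (Sq + St)) (a1 - a2).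
Proof.
move=> hq ht.
have uq := spd_unit hq; have ut := spd_unit ht.
have hM := spd_add hq ht; have uM := spd_unit hM.
set g := invmx (Sq + St) *m (a1 - a2).
set h := s - (a1 - Sq *m g).
have Mg : (Sq + St) *m g = a1 - a2 by rewrite /g mulKVmx.
have e1 : s - a1 = h - Sq *m g.
  by rewrite /h; apply/matrixP => i j; rewrite !mxE; ring.
have ea2 : a2 = a1 - (Sq *m g + St *m g).
  by rewrite -mulmxDl Mg; apply/matrixP => i j; rewrite !mxE; ring.
have e2 : s - a2 = h - (- (St *m g)).
  by rewrite /h {1}ea2; apply/matrixP => i j; rewrite !mxE; ring.
have eg : g = invmx (Sq + St) *m (a1 - a2) by [].
clearbody g h.
rewrite e1 e2 (qfB _ _ (inv_sym hq)) (qfB _ _ (inv_sym ht)) qfN !qfM qfSD.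
rewrite !mulmxN (mulmxA (invmx Sq)) (mulmxA (invmx St)) !mulVmx // !mul1mx.
rewrite (spd_sym hq) (spd_sym ht) !mulmxV // !mul1mx.
have E1 : qf Sq g + qf St g = qf (invmx (Sq + St)) (a1 - a2).
  rewrite -qfSD /qf -mulmxA Mg eg trmx_mul (inv_sym hM) /=.
  by rewrite ?mulmxA.
have E2 : dot (- g) h = - dot g h by rewrite /dot (linearN (@trmx R _ _)) /= mulNmx e00N.
lra.
Qed.

Lemma inv_conj (Sc A : 'M[R]_N) : Sc \in unitmx -> A \in unitmx ->
  A^T *m invmx (A *m Sc *m A^T) *m A = invmx Sc.
Proof.
move=> uS uA.
have uAt : A^T \in unitmx by rewrite unitmx_tr.
have uM : A *m Sc *m A^T \in unitmx by rewrite !unitmx_mul uA uS uAt.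
have h : Sc *m (A^T *m invmx (A *m Sc *m A^T) *m A) = 1%:M.
  have -> : Sc *m (A^T *m invmx (A *m Sc *m A^T) *m A)
      = invmx A *m ((A *m Sc *m A^T) *m invmx (A *m Sc *m A^T)) *m A.
    by rewrite !mulmxA mulVmx // mul1mx.
  by rewrite mulmxV // mulmx1 mulVmx.
by rewrite -[LHS]mul1mx -(mulVmx uS) -(mulmxA (invmx Sc)) h mulmx1.
Qed.

Lemma core (Sq St Sc A : 'M[R]_N) (mq mc : 'cV[R]_N) (K1 : R) (g : 'cV[R]_N -> R) :
  spd Sq -> spd St -> spd Sc -> A \in unitmx -> 0 < K1 -> (forall x, 0 < g x) ->
  (exists c, 0 < c /\ forall x,
     K1 * g x * expR (- qf (invmx (Sq + St)) (mq - A *m x) / 2)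
     = c * (g x * expR (- qf (invmx Sc) (x - mc) / 2)))
  <-> (mq = A *m mc /\ Sq = A *m Sc *m A^T - St).
Proof.
move=> hq ht hc uA K10 g0.
have hM := spd_add hq ht; have uM := spd_unit hM; have uS := spd_unit hc.
split; last first.
  move=> [-> eq]; exists K1; split => // x.
  have eM : Sq + St = A *m Sc *m A^T by rewrite eq subrK.
  rewrite eM -mulmxBr qfM inv_conj // -qfN opprB mulrA //.
move=> [c [c0 hx]].
have hq2 : forall x, qf (invmx (Sq + St)) (mq - A *m x)
    = qf (invmx Sc) (x - mc) + 2 * (ln K1 - ln c).
  move=> x; have E := hx x.
  set E1 := expR _ in E; set E2 := expR _ in E.
  have E' : g x * (K1 * E1) = g x * (c * E2) by rewrite mulrA (mulrC (g x)) E mulrCA.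
  move/(mulfI (lt0r_neq0 (g0 x))): E'.
  rewrite /E1 /E2 -[K1](lnK K10) -[c](lnK c0) -!expRD => /expR_inj; rewrite !expRK; lra.
have [H1 H2] := quad_ident (inv_sym hM) (inv_sym hc) hq2.
have hAM : A *m Sc *m A^T *m invmx (Sq + St) = 1%:M.
  have -> : A *m Sc *m A^T *m invmx (Sq + St)
     = A *m Sc *m (A^T *m invmx (Sq + St) *m A) *m invmx A.
    by rewrite !mulmxA mulmxK.
  by rewrite H1 -(mulmxA A Sc) mulmxV // mulmx1 mulmxV.
have eM : Sq + St = A *m Sc *m A^T.
  by rewrite -[LHS]mul1mx -hAM -mulmxA mulVmx // mulmx1.
split; last by rewrite -eM addrK.
rewrite -[LHS](mulKVmx uM) {1}eM -!mulmxA (mulmxA A^T) H2.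
by rewrite (mulmxA Sc) mulmxV // mul1mx.
Qed.
End L.

Set Implicit Arguments. Unset Strict Implicit.

Definition kS (R : realType) n (S : 'M[R]_n) : R :=
  (Num.sqrt (((pi : R) *+ 2) ^+ n * \det S))^-1.

Lemma mvnE (R : realType) n (z mu : 'cV[R]_n) (S : 'M[R]_n) :
  mvn_pdf z mu S = kS S * expR (- qf (invmx S) (z - mu) / 2).
Proof. by []. Qed.

Lemma kS_gt0 (R : realType) n (S : 'M[R]_n) : spd S -> 0 < kS S.
Proof.
move=> h; rewrite /kS invr_gt0 sqrtr_gt0 mulr_gt0 ?spd_det //.
by rewrite exprn_gt0 // mulrn_wgt0 // pi_gt0.
Qed.

Unset Implicit Arguments. Set Strict Implicit.
Theorem proposition2 (R : realType) (K : nat) (d : 'I_K -> nat) (m : nat)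
  (beta t : R)
  (p : forall i : 'I_K, 'cV[R]_(d i) -> R)
  (qk : R -> forall i : 'I_K, 'cV[R]_(d i) -> 'cV[R]_(d i) -> R)
  (A : R -> 'M[R]_(\sum_i d i)%N) (Sig_t : R -> 'M[R]_(\sum_i d i)%N)
  (Uenv : 'cV[R]_m -> R) (Uint : 'cV[R]_(\sum_i d i)%N -> 'cV[R]_m -> R)
  (mu_c : 'cV[R]_m -> 'cV[R]_(\sum_i d i)%N)
  (Sig_c : 'cV[R]_m -> 'M[R]_(\sum_i d i)%N)
  (mu_q : 'cV[R]_m -> R -> 'cV[R]_(\sum_i d i)%N)
  (Sig_q : 'cV[R]_m -> R -> 'M[R]_(\sum_i d i)%N)
  (qctx : 'cV[R]_(\sum_i d i)%N -> 'cV[R]_m -> R -> R) :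
  0 < beta -> 0 < t ->
  (forall i x, 0 < p i x) ->
  (forall e, spd (Sig_c e)) ->
  (exists c : 'cV[R]_m -> R, (forall e, 0 < c e) /\
     forall s e, expR (- (beta * Uint s e)) = c e * mvn_pdf s (mu_c e) (Sig_c e)) ->
  spd (Sig_t t) -> A t \in unitmx ->
  (forall s x : 'cV[R]_(\sum_i d i)%N,
     \prod_i qk t i (submxcol s i) (submxcol x i) = mvn_pdf s (A t *m x) (Sig_t t)) ->
  (forall e, spd (Sig_q e t)) ->
  (exists C : R, 0 < C /\ forall s e,
     qctx s e t = C * expR (- (beta * Uenv e)) * mvn_pdf s (mu_q e t) (Sig_q e t)) ->
  let pi_t := fun (x : 'cV[R]_(\sum_i d i)%N) (e : 'cV[R]_m) =>
    leb_int (fun s : 'cV[R]_(\sum_i d i)%N =>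
      (qctx s e t * \prod_i (p i (submxcol x i) * qk t i (submxcol s i) (submxcol x i)))%:E) in
  let pi_0 := fun (x : 'cV[R]_(\sum_i d i)%N) (e : 'cV[R]_m) =>
    expR (- (beta * Uenv e)) * (\prod_i p i (submxcol x i)) * expR (- (beta * Uint x e)) in
  (forall e, exists c : R, 0 < c /\ forall x, pi_t x e = (c * pi_0 x e)%:E)
  <->
  (forall e, mu_q e t = A t *m mu_c e /\
             Sig_q e t = A t *m Sig_c e *m (A t)^T - Sig_t t).
Proof.
move=> beta0 t0 p0 hSc [cU [cU0 hU]] hSt uA hqk hSq [C [C0 hctx]] pi_t pi_0.
pose Pp x := \prod_i p i (submxcol x i).
have Pp0 : forall x, 0 < Pp x by move=> x; apply: prodr_gt0 => i _; exact: p0.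
pose Ee e := expR (- (beta * Uenv e)).
have Ee0 : forall e, 0 < Ee e by move=> e; exact: expR_gt0.
have Hpt : forall e, exists KP, 0 < KP /\ forall x, pi_t x e =
   (KP * (C * kS (Sig_q e t) * kS (Sig_t t)) * (Ee e * Pp x) *
     expR (- qf (invmx (Sig_q e t + Sig_t t)) (mu_q e t - A t *m x) / 2))%:E.
  move=> e.
  have hP := spd_add (spd_inv (hSq e)) (spd_inv hSt).
  have [KP [KP0 HK]] := gauss_int hP.
  exists KP; split => // x.
  pose Kx := C * kS (Sig_q e t) * kS (Sig_t t) * (Ee e * Pp x).
  have Kx0 : 0 < Kx.
    by rewrite /Kx !mulr_gt0 ?kS_gt0 ?Ee0 ?Pp0.
  pose qM := qf (invmx (Sig_q e t + Sig_t t)) (mu_q e t - A t *m x).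
  pose s0 := mu_q e t - Sig_q e t *m (invmx (Sig_q e t + Sig_t t) *m (mu_q e t - A t *m x)).
  have -> : (KP * (C * kS (Sig_q e t) * kS (Sig_t t)) * (Ee e * Pp x) *
     expR (- qf (invmx (Sig_q e t + Sig_t t)) (mu_q e t - A t *m x) / 2))%:E
     = (KP * expR (ln Kx - qM / 2))%:E.
    congr EFin; rewrite expRD lnK; last by rewrite posrE.
    rewrite /Kx /qM -mulNr.
    set a1 := C. set a2 := kS _. set a3 := kS _. set a4 := Ee e. set a5 := Pp x. set a6 := expR _.
    ring.
  rewrite -(HK s0 (ln Kx - qM / 2)) /pi_t; congr leb_int; apply/funext => s; congr EFin.
  rewrite hctx big_split /= hqk !mvnE.
  have hs := qf_sum (mu_q e t) (A t *m x) s (hSq e) hSt.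
  rewrite (_ : ln Kx - qM / 2 - qf (invmx (Sig_q e t) + invmx (Sig_t t)) (s - s0) / 2
     = ln Kx + (- qf (invmx (Sig_q e t)) (s - mu_q e t) / 2
                + - qf (invmx (Sig_t t)) (s - A t *m x) / 2)); last first.
    rewrite /qM /s0; lra.
  rewrite !expRD lnK; last by rewrite posrE.
  rewrite /Kx /Pp /Ee.
  set a1 := C. set a2 := kS _. set a3 := kS _. set a4 := expR (- (beta * _)). set a5 := \prod_i _.
  set a6 := expR (- qf (invmx (Sig_q e t)) _ / 2). set a7 := expR _.
  ring.
have Hp0 : forall e x, pi_0 x e = Ee e * Pp x * (cU e * (kS (Sig_c e) *
     expR (- qf (invmx (Sig_c e)) (x - mu_c e) / 2))).
  by move=> e x; rewrite /pi_0 hU mvnE.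
have kc0 : forall e, 0 < cU e * kS (Sig_c e).
  by move=> e; rewrite mulr_gt0 ?kS_gt0.
have g0 : forall e x, 0 < Ee e * Pp x by move=> e x; rewrite mulr_gt0.
split.
- move=> H e.
  have [KP [KP0 HK]] := Hpt e.
  have [c [c0 Hc]] := H e.
  have K10 : 0 < KP * (C * kS (Sig_q e t) * kS (Sig_t t)).
    by rewrite !mulr_gt0 ?kS_gt0.
  apply/(core (mu_q e t) (mu_c e) (hSq e) hSt (hSc e) uA K10 (g0 e)).
  exists (c * (cU e * kS (Sig_c e))); split; first by rewrite mulr_gt0.
  move=> x; have := Hc x; rewrite HK Hp0 => -[->].
  set a1 := Ee e * Pp x. set a2 := expR _. set a3 := cU e. set a4 := kS _.
  ring.
- move=> H e.
  have [KP [KP0 HK]] := Hpt e.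
  have K10 : 0 < KP * (C * kS (Sig_q e t) * kS (Sig_t t)).
    by rewrite !mulr_gt0 ?kS_gt0.
  have [c [c0 Hc]] :=
    (core (mu_q e t) (mu_c e) (hSq e) hSt (hSc e) uA K10 (g0 e)).2 (H e).
  exists (c / (cU e * kS (Sig_c e))); split; first by rewrite divr_gt0.
  move=> x; rewrite HK Hp0; congr EFin; rewrite Hc.
  have := kc0 e; set k := cU e * kS (Sig_c e) => k0.
  rewrite (_ : cU e * (kS (Sig_c e) * expR (- qf (invmx (Sig_c e)) (x - mu_c e) / 2))
     = k * expR (- qf (invmx (Sig_c e)) (x - mu_c e) / 2)); last by rewrite /k mulrA.
  set a1 := Ee e * Pp x. set a2 := expR _.
  field; exact: lt0r_neq0.
Qed.
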